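(* Let $\mathbf m\in\mathcal M$, $z_0\in\mathbb C\setminus\operatorname{supp}\mathbf m$ with $u:=G_{\mathbf m}(z_0)\ne0$, and $c\in\mathbb R$. Then the set $\{z\in\mathbb C\setminus\operatorname{supp}\mathbf m:\operatorname{Re}\mathcal S_u(z)>c\}$ has exactly one unbounded connected component, and likewise $\{z\in\mathbb C\setminus\operatorname{supp}\mathbf m:\operatorname{Re}\mathcal S_u(z)<c\}$ has exactly one unbounded connected component.
   Context: $\mathcal M$ is the set of compactly supported Borel probability measures on $\mathbb R$; $G_{\mathbf m}(z)=\int\frac{d\mathbf m(x)}{z-x}$. For $u\ne0$, $\operatorname{Re}\mathcal S_u(z)=\operatorname{Re}(zu)-\int\log|z-x|\,d\mathbf m(x)-\log|u|$ (the real part of $\mathcal S_u(z)=zu-\int\log(z-x)d\mathbf m(x)-\log u$). *)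

(* Defs.v *)
From mathcomp Require Import all_boot all_order all_algebra.
From mathcomp Require Import complex.
From mathcomp Require Import all_classical all_reals all_analysis.
Import numFieldNormedType.Exports.
Import Order.TTheory GRing.Theory Num.Theory.
Local Open Scope classical_set_scope.
Local Open Scope ring_scope.

Set Implicit Arguments.
Unset Strict Implicit.
Unset Printing Implicit Defensive.

(* The complex plane, as a topological space, is R * R (product topology);
   a point z = (z.1, z.2) stands for z.1 + i z.2. *)
Definition plane (R : realType) := (R * R)%type.

Definition cpx (R : realType) (z : plane R) : R[i] := (z.1 +i* z.2)%C.

Definition rcpx (R : realType) (x : R) : R[i] := (x +i* 0)%C.

Definition cmod (R : realType) (w : R[i]) : R :=
  Num.sqrt (complex.Re w ^+ 2 + complex.Im w ^+ 2).

Definition supp (R : realType) (m : probability R R) : set R :=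
  [set x | forall U : set R, open U -> U x -> (0 < m U)%E].

Definition compactly_supported (R : realType) (m : probability R R) : Prop :=
  compact (supp m).

Definition off_supp (R : realType) (m : probability R R) : set (plane R) :=
  [set z | ~ (z.2 = 0 /\ supp m z.1)].

Definition cauchy_transform (R : realType) (m : probability R R) (z : plane R)
  : R[i] :=
  (Rintegral m setT (fun x => complex.Re ((cpx z - rcpx x)^-1))
   +i* Rintegral m setT (fun x => complex.Im ((cpx z - rcpx x)^-1)))%C.

Definition ReS (R : realType) (m : probability R R) (u : R[i]) (z : plane R)
  : R :=
  complex.Re (cpx z * u)
  - Rintegral m setT (fun x => ln (cmod (cpx z - rcpx x)))
  - ln (cmod u).

Definition pnorm (R : realType) (z : plane R) : R := cmod (cpx z).

Definition unbounded (R : realType) (A : set (plane R)) : Prop :=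
  ~ (exists M : R, forall z, A z -> pnorm z <= M).

Definition unique_unbounded_component (R : realType) (A : set (plane R))
  : Prop :=
  exists z, A z /\ unbounded (connected_component A z) /\
    forall w, A w -> unbounded (connected_component A w) ->
      connected_component A w = connected_component A z.

(* Main.v *)
Require Import Defs.
From mathcomp Require Import all_boot all_order all_algebra.
From mathcomp Require Import complex.
From mathcomp Require Import all_classical all_reals all_analysis.
From mathcomp Require Import ring lra measurable_realfun.
Import numFieldNormedType.Exports.
Import Order.TTheory GRing.Theory Num.Theory.
Local Open Scope classical_set_scope.
Local Open Scope ring_scope.
Set Implicit Arguments.
Unset Strict Implicit.
Unset Printing Implicit Defensive.

Section S.
Variable R : realType.
Definition nrm (p q : R) := Num.sqrt (p ^+ 2 + q ^+ 2).
Lemma nrm_ge0 p q : 0 <= nrm p q.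
Proof. exact: sqrtr_ge0. Qed.
Lemma nrm_sq p q : nrm p q ^+ 2 = p ^+ 2 + q ^+ 2.
Proof. by rewrite sqr_sqrtr // addr_ge0 // sqr_ge0. Qed.
Lemma nrm_le p q s : 0 <= s -> p ^+ 2 + q ^+ 2 <= s ^+ 2 -> nrm p q <= s.
Proof.
move=> s0 h; have n0 := nrm_ge0 p q; have e := nrm_sq p q.
rewrite -(ler_pXn2r (n := 2)) ?inE ?e //.
Qed.
Lemma nrm_ge p q s : s ^+ 2 <= p ^+ 2 + q ^+ 2 -> s <= nrm p q.
Proof.
move=> h; have n0 := nrm_ge0 p q; have e := nrm_sq p q.
case: (lerP s 0) => s0; first exact: le_trans s0 n0.
rewrite -(ler_pXn2r (n := 2)) ?inE ?e //; exact: ltW.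
Qed.
Lemma nrm_CS p q r s : p * r + q * s <= nrm p q * nrm r s.
Proof.
have h1 := nrm_sq p q; have h2 := nrm_sq r s.
have n1 := nrm_ge0 p q; have n2 := nrm_ge0 r s.
case: (lerP (p * r + q * s) 0) => h; first by apply: le_trans h _; exact: mulr_ge0.
rewrite -(ler_pXn2r (n := 2)) //; try (by rewrite nnegrE ?(ltW h) ?mulr_ge0).
rewrite exprMn h1 h2; have := sqr_ge0 (p * s - q * r); nra.
Qed.
Lemma nrm_tri p q r s : nrm (p + r) (q + s) <= nrm p q + nrm r s.
Proof.
apply: nrm_le; first by rewrite addr_ge0 // nrm_ge0.
have h1 := nrm_sq p q; have h2 := nrm_sq r s; have := nrm_CS p q r s.
nra.
Qed.
Lemma nrm_x0 x : nrm x 0 = `|x|.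
Proof. by rewrite /nrm expr0n /= addr0 sqrtr_sqr. Qed.
Lemma ln_le_lin (y b : R) : 0 < y -> 0 < b -> ln y <= b * y - ln b.
Proof.
move=> y0 b0; have := @le_ln1Dx R (b * y - 1).
have -> : 1 + (b * y - 1) = b * y by ring.
rewrite lnM ?inE // => h.
have : ln b + ln y <= b * y - 1 by apply: h; have := mulr_gt0 b0 y0; lra.
lra.
Qed.
Lemma ln_diff (y yp d : R) : 1 <= y -> 0 <= yp -> yp <= y + d -> 0 <= d ->
  ln yp - ln y <= d / y.
Proof.
move=> y1 yp0 h d0; have y0 : 0 < y by lra.
have q0 : 0 <= d / y by rewrite divr_ge0 // ltW.
case: (eqVneq yp 0) => [->|ny].
  rewrite ln0 //; have := ln_ge0 y1; lra.
have ypp : 0 < yp by rewrite lt_def ny.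
have e : ln yp = ln (yp / y) + ln y.
  by rewrite -lnM ?posrE ?divr_gt0 // divfK // gt_eqF.
rewrite e addrK.
have := @le_ln1Dx R (yp / y - 1).
have -> : 1 + (yp / y - 1) = yp / y by ring.
have -> : yp / y - 1 = (yp - y) / y by rewrite mulrBl divff // gt_eqF.
move=> H; apply: le_trans (H _) _.
  have := divr_gt0 ypp y0; rewrite mulrBl divff ?gt_eqF //; lra.
rewrite ler_pM2r ?invr_gt0 //. lra.
Qed.
End S.

Lemma h_meas (R : realType) (a b : R) : measurable_fun setT (fun x : R => ln (nrm (a - x) b)).
Proof.
apply: measurableT_comp; first exact: measurable_ln.
apply: measurableT_comp; first exact: continuous_measurable_fun (@sqrt_continuous R).
apply: measurable_funD => //.
apply: measurable_funX; apply: measurable_funB => //.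
Qed.

Section Meas.
Variables (R : realType) (m : probability R R) (K : R).
Hypothesis mK : m (~` [set` `[-K, K]]) = 0%E.
Let I := [set` `[-K, K]] : set R.
Let mI : measurable I. Proof. exact: measurable_itv. Qed.

Lemma mI1 : m I = 1%E.
Proof.
have := probability_setC m mI; rewrite mK.
case: (m I) => [r||] //=.
by rewrite -EFinB => -[] h; congr EFin; lra.
Qed.

Lemma Rint_restr (h : R -> R) M : measurable_fun setT h ->
  (forall x, I x -> `|h x| <= M) ->
  m.-integrable I (EFin \o h) /\ Rintegral m setT h = Rintegral m I h.
Proof.
move=> mh hM.
have iI : m.-integrable I (EFin \o h).
  apply: measurable_bounded_integrable => //.
    by apply: (le_lt_trans (probability_le1 m mI)); exact: ltry.
  exact: measurable_funS mh.
  exists M; split; first exact: num_real.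
  move=> y My x Ix; apply: le_trans (hM x Ix) _; exact: ltW.
have eI : setT `\` ~` I = I by rewrite setDE setCK setTI.
have mC : measurable (~` I) by exact: measurableC.
have iT : m.-integrable setT (EFin \o h).
  rewrite (negligible_integrable mC) // ?eI //.
  exact/measurable_EFinP.
split => //.
rewrite /Rintegral (negligible_integral mC) // eI //.
Qed.

Lemma int_cst (c : R) : m.-integrable I (EFin \o (fun _ : R => c)).
Proof.
apply: measurable_bounded_integrable => //.
  by apply: (le_lt_trans (probability_le1 m mI)); exact: ltry.
exists `|c|; split; first exact: num_real.
by move=> y My x Ix; apply: ltW.
Qed.

Lemma Rint_cst (c : R) : Rintegral m I (fun _ => c) = c.
Proof. by rewrite Rintegral_cst // -[X in c * fine X]/(m I : \bar R) mI1 /= mulr1. Qed.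

Lemma Rint_bnd (h : R -> R) lo hi : measurable_fun setT h ->
  (forall x, I x -> lo <= h x <= hi) ->
  lo <= Rintegral m setT h <= hi.
Proof.
move=> mh hb.
have [iI ->] : m.-integrable I (EFin \o h) /\ Rintegral m setT h = Rintegral m I h.
  apply: (@Rint_restr h (`|lo| + `|hi|)) => // x Ix.
  have /andP[h1 h2] := hb x Ix.
  have a1 := ler_norm hi; have a2 := ler_norm (- lo); rewrite normrN in a2.
  have a3 := normr_ge0 lo; have a4 := normr_ge0 hi.
  rewrite ler_norml; apply/andP; split; lra.
apply/andP; split.
  rewrite -[X in X <= _]Rint_cst; apply: le_Rintegral => //; first exact: int_cst.
  by move=> x Ix; have /andP[] := hb x Ix.
rewrite -[X in _ <= X]Rint_cst; apply: le_Rintegral => //; first exact: int_cst.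
by move=> x Ix; have /andP[] := hb x Ix.
Qed.

Lemma Rint_diff (h1 h2 : R -> R) M1 M2 dd : measurable_fun setT h1 ->
  measurable_fun setT h2 ->
  (forall x, I x -> `|h1 x| <= M1) -> (forall x, I x -> `|h2 x| <= M2) ->
  (forall x, I x -> h1 x - h2 x <= dd) ->
  Rintegral m setT h1 - Rintegral m setT h2 <= dd.
Proof.
move=> m1 m2 b1 b2 hd.
have [i1 ->] := Rint_restr m1 b1.
have [i2 ->] := Rint_restr m2 b2.
rewrite -RintegralB //.
rewrite -[X in _ <= X]Rint_cst; apply: le_Rintegral => //.
- rewrite (_ : EFin \o _ = (fun x => (EFin \o h1) x - (EFin \o h2) x)%E).
    exact: integrableB.
  by apply/funext => x /=; rewrite EFinB.
- exact: int_cst.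
Qed.
End Meas.

Lemma null_compact (R : realType) (m : probability R R) (C : set R) :
  compact C -> (forall y, C y -> ~ supp m y) -> m.-negligible C.
Proof.
move=> cC Cs.
have H : forall y, exists U : set R, C y -> [/\ open U, U y & m U = 0%E].
  move=> y; case: (pselect (C y)) => Cy; last by exists set0.
  have /existsNP [U /not_implyP [oU /not_implyP [Uy nU]]] := Cs y Cy.
  exists U => _; split => //.
  apply/eqP; rewrite eq_le measure_ge0 andbT; rewrite leNgt; exact/negP.
have [F HF] := choice H.
move: cC; rewrite compact_cover => /(_ R C F).
case.
- by move=> i Ci; have [] := HF i Ci.
- by move=> y Cy; exists y => //; have [] := HF y Cy.
move=> D' D'C cov.
apply: (negligibleS cov).
rewrite /cover bigcup_fset big_seq.
elim/big_ind: _ => //.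
- exact: negligible_set0.
- by move=> A B; apply: negligibleU.
move=> i iD; have [oF _ mF] := HF i (set_mem (D'C i iD)).
by apply/negligibleP => //; exact: open_measurable.
Qed.

Lemma supp_K (R : realType) (m : probability R R) : compactly_supported m ->
  exists K : R, [/\ 1 <= K, (forall x, supp m x -> `|x| < K) &
     m (~` [set` `[-K, K]]) = 0%E].
Proof.
move=> /compact_bounded [M0 [M0r HM]].
have hs : forall x, supp m x -> `|x| <= M0 + 1.
  by move=> x sx; apply: (HM (M0 + 1)) => //; rewrite ltrDl.
pose B : R := `|M0| + 2.
have B1 : 1 <= B by have := normr_ge0 M0; rewrite /B; lra.
have hsB : forall x, supp m x -> `|x| < B.
  move=> x /hs h; have := ler_norm M0; rewrite /B; lra.
exists B; split => //.
have mC : measurable (~` [set` `[-B, B]]) by apply: measurableC; exact: measurable_itv.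
apply: (measure_negligible mC).
pose F := fun n : nat => [set` `[B, B + n%:R]] `|` [set` `[- (B + n%:R), - B]].
apply: (@negligibleS _ _ _ _ (\bigcup_n F n)).
  move=> x /=; rewrite in_itv /= => /negP; rewrite negb_and -!ltNge => hx.
  have hxa : B < `|x|.
    case/orP: hx => h; first by have := ler_norm (- x); rewrite normrN; lra.
    by have := ler_norm x; lra.
  exists (Num.truncn (`|x| - B)).+1 => //.
  have := archimedean.Num.Theory.truncnS_gt (`|x| - B) => h.
  rewrite /F /=; case/orP: hx => h'; [right|left]; rewrite in_itv /=; apply/andP; split.
  - by have := ler_norm (- x); rewrite normrN; lra.
  - lra.
  - lra.
  - by have := ler_norm x; lra.
apply: negligible_bigcup => n; apply: negligibleU.
  apply: null_compact; first exact: segment_compact.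
  move=> y /=; rewrite in_itv /= => /andP[h1 _] /hsB; have := ler_norm y; lra.
apply: null_compact; first exact: segment_compact.
move=> y /=; rewrite in_itv /= => /andP[_ h2] /hsB; have := ler_norm (- y); rewrite normrN; lra.
Qed.

Section Topo.
Variable R : realType.
Definition segp (P Q : plane R) (s : R) : plane R :=
  (P.1 + s * (Q.1 - P.1), P.2 + s * (Q.2 - P.2)).

Lemma segp_cont P Q : continuous (segp P Q).
Proof.
move=> s.
have h1 : (fun s => P.1 + s * (Q.1 - P.1)) @ s --> P.1 + s * (Q.1 - P.1).
  apply: cvgD; first exact: cvg_cst.
  apply: cvgMl; exact: cvg_id.
have h2 : (fun s => P.2 + s * (Q.2 - P.2)) @ s --> P.2 + s * (Q.2 - P.2).
  apply: cvgD; first exact: cvg_cst.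
  apply: cvgMl; exact: cvg_id.
rewrite /segp.
apply: (@cvg_pair _ _ _ _ (nbhs (P.1 + s * (Q.1 - P.1))) (nbhs (P.2 + s * (Q.2 - P.2)))).
  exact: h1.
exact: h2.
Qed.

Lemma join_seg (A : set (plane R)) P Q :
  (forall s, 0 <= s <= 1 -> A (segp P Q s)) -> connected_component A P Q.
Proof.
move=> hA.
have e0 : segp P Q 0 = P by rewrite /segp; case: P Q {hA} => [p1 p2] [q1 q2] /=; congr (_, _); ring.
have e1 : segp P Q 1 = Q by rewrite /segp; case: P Q {hA e0} => [p1 p2] [q1 q2] /=; congr (_, _); ring.
have cB : connected (segp P Q @` [set` `[0, 1]]).
  apply: connected_continuous_connected; first exact: segment_connected.
  by apply: continuous_subspaceT; exact: segp_cont.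
apply: (connected_component_max _ _ cB).
- by exists 0 => //=; rewrite in_itv /= lexx ler01.
- by move=> _ [s /= hs <-]; apply: hA; rewrite in_itv /= in hs.
- by exists 1 => //=; rewrite in_itv /= lexx ler01.
Qed.

Definition pn (z : plane R) := nrm z.1 z.2.
Lemma pnormE z : pnorm z = pn z. Proof. by []. Qed.

Lemma crit (A : set (plane R)) b R0 :
  A b -> (forall M, exists z, connected_component A b z /\ M < pn z) ->
  (forall z, A z -> R0 <= pn z -> connected_component A b z) ->
  unique_unbounded_component A.
Proof.
move=> Ab hunb hjoin; exists b; split => //; split.
  move=> [M HM]; have [z [cz Mz]] := hunb M.
  have := HM z cz; rewrite pnormE; lra.
move=> w Aw unb.
have [z [cwz Rz]] : exists z, connected_component A w z /\ R0 <= pn z.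
  apply: contrapT => hn; apply: unb; exists R0 => z cz.
  rewrite pnormE; apply: contrapT => /negP; rewrite -ltNge => h.
  by apply: hn; exists z; split => //; apply: ltW.
have Az : A z := connected_component_sub cwz.
rewrite (same_connected_component cwz).
have := hjoin z Az Rz => cbz.
rewrite (same_connected_component cbz).
done.
Qed.
End Topo.

Lemma nrm_scale (R : realType) (t p q : R) : nrm (t * p) (t * q) = `|t| * nrm p q.
Proof.
rewrite /nrm !exprMn -mulrDr sqrtrM ?sqr_ge0 // sqrtr_sqr //.
Qed.

Lemma nrm_N (R : realType) (p q : R) : nrm (- p) (- q) = nrm p q.
Proof. by rewrite /nrm !sqrrN. Qed.

Lemma arith1 (R : realFieldType) (P D t a W : R) : 0 < a -> 0 <= P -> 0 <= t ->
  2 * D <= a * P -> W = P ^+ 2 - 2 * t * D + t ^+ 2 * a ^+ 2 -> P ^+ 2 / 4 <= W.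
Proof.
move=> a0 P0 t0 hD ->.
have ta : 0 <= t ^+ 2 * a ^+ 2 by apply: mulr_ge0; apply: sqr_ge0.
have P2 : 0 <= P ^+ 2 by apply: sqr_ge0.
case: (lerP D 0) => hd.
  have : 0 <= t * (- D) by apply: mulr_ge0 => //; lra.
  have e : 2 * t * D = - (2 * (t * (- D))) by ring.
  rewrite e; lra.
have h1 : 4 * D ^+ 2 <= a ^+ 2 * P ^+ 2.
  have h0 : 0 <= 2 * D by lra.
  have := ler_pM h0 h0 hD hD.
  have e1 : 2 * D * (2 * D) = 4 * D ^+ 2 by ring.
  have e2 : a * P * (a * P) = a ^+ 2 * P ^+ 2 by ring.
  rewrite e1 e2; lra.
have h2 := sqr_ge0 (t * a ^+ 2 - D).
have a2 : 0 < a ^+ 2 by rewrite exprn_gt0.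
rewrite -(ler_pM2l a2).
have e3 : a ^+ 2 * (P ^+ 2 - 2 * t * D + t ^+ 2 * a ^+ 2) =
  (t * a ^+ 2 - D) ^+ 2 + a ^+ 2 * P ^+ 2 - D ^+ 2 by ring.
have e4 : a ^+ 2 * (P ^+ 2 / 4) = (a ^+ 2 * P ^+ 2) / 4 by ring.
rewrite e3 e4.
have : 0 <= a ^+ 2 * P ^+ 2 by apply: mulr_ge0; lra.
lra.
Qed.

Section Main.
Variables (R : realType) (m : probability R R) (K : R) (u : R[i]) (c : R).
Hypotheses (K1 : 1 <= K) (hsK : forall x, supp m x -> `|x| < K)
  (mK : m (~` [set` `[-K, K]]) = 0%E) (u0 : u != 0).

Definition al := complex.Re u.
Definition be := - complex.Im u.
Definition a := nrm al be.

Lemma a_gt0 : 0 < a.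
Proof.
have hu : u = (al +i* (- be))%C by rewrite /al /be opprK; case: u.
rewrite lt_def nrm_ge0 andbT; apply/negP => /eqP h.
have e : al ^+ 2 + be ^+ 2 = 0 by rewrite -nrm_sq -/a h expr0n.
have h1 : al ^+ 2 = 0 by have := sqr_ge0 al; have := sqr_ge0 be; lra.
have h2 : be ^+ 2 = 0 by have := sqr_ge0 al; have := sqr_ge0 be; lra.
have hal : al = 0 by apply/eqP; rewrite -sqrf_eq0 h1.
have hbe : be = 0 by apply/eqP; rewrite -sqrf_eq0 h2.
by move: u0; rewrite hu hal hbe oppr0 => /eqP; apply.
Qed.

Definition dot (z : plane R) := z.1 * al + z.2 * be.
Definition L (z : plane R) := Rintegral m setT (fun x => ln (nrm (z.1 - x) z.2)).
Definition f z := dot z - L z - ln a.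

Lemma fE z : ReS m u z = f z.
Proof.
rewrite /ReS /f /dot /L /al /be.
have -> : complex.Re (cpx z * u) = z.1 * complex.Re u + z.2 * - complex.Im u.
  by rewrite /cpx; case: u => p q /=; ring.
have -> : cmod u = nrm (complex.Re u) (- complex.Im u).
  by rewrite /cmod /nrm sqrrN.
have -> : (fun x => ln (cmod (cpx z - rcpx x))) = (fun x => ln (nrm (z.1 - x) z.2)).
  by apply/funext => x; rewrite /cmod /cpx /rcpx /nrm /= subr0.
by [].
Qed.

Lemma off_big z : K < pn z -> off_supp m z.
Proof.
move=> h [z2 sz]; have := hsK sz; move: h; rewrite /pn z2 nrm_x0; lra.
Qed.

Lemma dot_le z : `|dot z| <= pn z * a.
Proof.
rewrite ler_norml; apply/andP; split; last exact: nrm_CS.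
have := nrm_CS (- z.1) (- z.2) al be; rewrite nrm_N /dot -/(pn z) -/a.
rewrite !mulNr; lra.
Qed.

Lemma a2 : a ^+ 2 = al ^+ 2 + be ^+ 2.
Proof. exact: nrm_sq. Qed.

Definition mv (z : plane R) t : plane R := (z.1 + t * al, z.2 + t * be).

Lemma dot_mv z t : dot (mv z t) = dot z + t * a ^+ 2.
Proof. rewrite a2 /dot /mv /=; ring. Qed.

Lemma pn_mv_sq z t : pn (mv z t) ^+ 2 = pn z ^+ 2 + 2 * t * dot z + t ^+ 2 * a ^+ 2.
Proof. rewrite /pn !nrm_sq /dot /mv /=; ring. Qed.

Lemma pn_mv_le z t : pn (mv z t) <= pn z + `|t| * a.
Proof. by rewrite /pn /mv /= -nrm_scale nrm_tri. Qed.

Lemma dist_bnd z x : `|x| <= K -> pn z - K <= nrm (z.1 - x) z.2 <= pn z + K.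
Proof.
move=> hx; apply/andP; split.
  have := nrm_tri (z.1 - x) z.2 x 0; rewrite addr0 subrK nrm_x0 -/(pn z); lra.
have := nrm_tri z.1 z.2 (- x) 0; rewrite addr0 nrm_x0 normrN -/(pn z); lra.
Qed.

Lemma inI x : [set` `[-K, K]] x -> `|x| <= K.
Proof. by rewrite /= in_itv /= => h; rewrite ler_norml. Qed.

Lemma L_bnd z : 2 * K <= pn z -> ln (pn z / 2) <= L z <= ln (2 * pn z).
Proof.
move=> hz; apply: (Rint_bnd mK); first exact: h_meas.
move=> x /inI hx; have /andP[d1 d2] := dist_bnd z hx.
have k1 := K1; have p0 : 0 < pn z by lra.
apply/andP; split; rewrite ler_ln ?posrE; lra.
Qed.

Lemma ln_abs_le (d B : R) : 1 <= d -> d <= B -> `|ln d| <= B.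
Proof.
move=> d1 dB; have l0 := ln_ge0 d1; rewrite ger0_norm //.
have := @ln_le_lin R d 1; rewrite mul1r ln1 subr0; lra.
Qed.

Lemma L_diff w z dd r : 0 <= dd -> 1 <= r ->
  (forall x, `|x| <= K -> [/\ 1 <= nrm (w.1 - x) w.2, r <= nrm (z.1 - x) z.2 &
      nrm (w.1 - x) w.2 <= nrm (z.1 - x) z.2 + dd]) ->
  L w - L z <= dd / r.
Proof.
move=> dd0 r1 H.
apply: (Rint_diff (M1 := pn w + K) (M2 := pn z + K) mK); try exact: h_meas.
- move=> x /inI hx; have [h1 _ _] := H x hx; apply: ln_abs_le => //.
  by have /andP[] := dist_bnd w hx.
- move=> x /inI hx; have [_ h2 _] := H x hx; apply: ln_abs_le; first lra.
  by have /andP[] := dist_bnd z hx.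
move=> x /inI hx; have [h1 h2 h3] := H x hx.
apply: le_trans (ln_diff _ _ h3 dd0) _; first lra.
  exact: nrm_ge0.
apply: ler_wpM2l => //; rewrite lef_pV2 ?posrE //; lra.
Qed.

Definition lu := ln a.

Lemma ler_normN (x : R) : - x <= `|x|.
Proof. by rewrite -normrN ler_norm. Qed.

Lemma seg_pn (P Q : plane R) (s : R) : 0 <= s <= 1 -> pn (segp P Q s) <= pn P + pn Q.
Proof.
move=> /andP[s0 s1].
have -> : segp P Q s = ((1 - s) * P.1 + s * Q.1, (1 - s) * P.2 + s * Q.2).
  by rewrite /segp; congr pair; ring.
apply: le_trans (nrm_tri _ _ _ _) _.
rewrite !nrm_scale -/(pn P) -/(pn Q) (ger0_norm s0) ger0_norm; last lra.
have := nrm_ge0 P.1 P.2; have := nrm_ge0 Q.1 Q.2; rewrite -/(pn P) -/(pn Q).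
nra.
Qed.

Lemma dot_seg (P Q : plane R) (s : R) : dot (segp P Q s) = dot P + s * (dot Q - dot P).
Proof. rewrite /dot /segp /=; ring. Qed.

Lemma ray_seg (r1 r2 s : R) : segp (r1 * al, r1 * be) (r2 * al, r2 * be) s =
  ((r1 + s * (r2 - r1)) * al, (r1 + s * (r2 - r1)) * be).
Proof. rewrite /segp /=; congr pair; ring. Qed.

Lemma pn_ray (r : R) : 0 <= r -> pn (r * al, r * be) = r * a.
Proof. by move=> r0; rewrite /pn /= nrm_scale ger0_norm. Qed.

Lemma dot_ray (r : R) : dot (r * al, r * be) = r * a ^+ 2.
Proof. rewrite a2 /dot /=; ring. Qed.

Lemma a_neq0 : a != 0.
Proof. by have := a_gt0; rewrite lt0r => /andP[]. Qed.

Definition Sset := [set z | off_supp m z /\ c < ReS m u z].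

Definition T0 := 2 / a ^+ 2 * (`|c| + `|lu| + `|ln (a / 4)| + 1) + 2 * K / a + 1.

Lemma ray_S (r : R) : T0 <= r -> Sset (r * al, r * be).
Proof.
move=> hr; have k1 := K1; have ha := a_gt0.
have Ha2 : a ^+ 2 * T0 = 2 * (`|c| + `|lu| + `|ln (a / 4)| + 1) + 2 * K * a + a ^+ 2.
  by rewrite /T0; field; exact: a_neq0.
have Ha1 : a * T0 = 2 / a * (`|c| + `|lu| + `|ln (a / 4)| + 1) + 2 * K + a.
  by rewrite /T0; field; exact: a_neq0.
have X0 : 0 <= 2 / a * (`|c| + `|lu| + `|ln (a / 4)| + 1).
  by apply: mulr_ge0; [rewrite divr_ge0 // ltW | have := normr_ge0 c; have := normr_ge0 lu; have := normr_ge0 (ln (a / 4)); lra].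
have a2p : 0 < a ^+ 2 by rewrite exprn_gt0.
have h2 : a ^+ 2 * T0 <= a ^+ 2 * r by rewrite ler_pM2l.
have h1 : a * T0 <= a * r by rewrite ler_pM2l.
have r0 : 0 <= r.
  have : 0 <= a * r by lra.
  by rewrite pmulr_rge0.
have ra : 2 * K <= r * a by rewrite mulrC; lra.
have hp := pn_ray r0.
split.
  by apply: off_big; rewrite hp; lra.
rewrite fE /f dot_ray -/lu.
have /andP[_ hL] : ln (pn (r * al, r * be) / 2) <= L (r * al, r * be) <= ln (2 * pn (r * al, r * be)).
  by apply: L_bnd; rewrite hp.
rewrite hp in hL.
have hl : ln (2 * (r * a)) <= a / 4 * (2 * (r * a)) - ln (a / 4).
  by apply: ln_le_lin; [lra | rewrite divr_gt0].
have e : a / 4 * (2 * (r * a)) = r * a ^+ 2 / 2 by field.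
rewrite e in hl.
have := ler_norm c; have := ler_norm lu; have := ler_norm (ln (a / 4)); have := ler_norm (- ln (a/4)); rewrite normrN.
have Ka : 0 <= K * a by apply: mulr_ge0; lra.
lra.
Qed.

Definition Rs := 2 * K + 2 / a + 2 * expR (`|c| + `|lu|) + 1.

Lemma big_S z : Sset z -> Rs <= pn z ->
  [/\ 0 <= dot z, 2 * K <= pn z & 2 <= a * pn z].
Proof.
move=> [_ hc] hR; have k1 := K1; have ha := a_gt0.
have e0 : 0 < 2 / a by rewrite divr_gt0.
have ex := expR_gt0 (`|c| + `|lu|).
have hK : 2 * K <= pn z by move: hR; rewrite /Rs; lra.
split => //; last first.
  have e : a * Rs = 2 * K * a + 2 + 2 * a * expR (`|c| + `|lu|) + a.
    by rewrite /Rs; field; exact: a_neq0.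
  have : a * Rs <= a * pn z by rewrite ler_pM2l.
  have : 0 <= K * a by apply: mulr_ge0; lra.
  have : 0 <= a * expR (`|c| + `|lu|) by apply: mulr_ge0; lra.
  lra.
rewrite fE /f -/lu in hc.
have /andP[hL _] := L_bnd hK.
have : `|c| + `|lu| <= ln (pn z / 2).
  rewrite -[X in X <= _]expRK ler_ln ?posrE //; last lra.
  by move: hR; rewrite /Rs; lra.
have := ler_normN c; have := ler_normN lu.
lra.
Qed.

Lemma legS1 z t : Sset z -> Rs <= pn z -> 0 <= t -> Sset (mv z t).
Proof.
move=> Sz hR t0; have [d0 hK haz] := big_S Sz hR.
have k1 := K1; have ha := a_gt0.
have hw : pn z <= pn (mv z t).
  apply: nrm_ge; rewrite -nrm_sq -/(pn (mv z t)) pn_mv_sq.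
  have : 0 <= t * dot z by apply: mulr_ge0.
  have : 0 <= t ^+ 2 * a ^+ 2 by apply: mulr_ge0; apply: sqr_ge0.
  lra.
split; first by apply: off_big; lra.
case: Sz => _; rewrite !fE /f dot_mv => hc.
have hd : L (mv z t) - L z <= (t * a) / (pn z / 2).
  apply: L_diff; first exact: mulr_ge0 t0 (ltW ha).
    lra.
  move=> x hx; have /andP[dw1 dw2] := dist_bnd (mv z t) hx.
  have /andP[dz1 dz2] := dist_bnd z hx.
  split; [lra|lra|].
  have -> : (mv z t).1 - x = (z.1 - x) + t * al by rewrite /mv /=; ring.
  apply: le_trans (nrm_tri _ _ _ _) _.
  by rewrite nrm_scale ger0_norm.
have hq : (t * a) / (pn z / 2) <= t * a ^+ 2.
  have p0 : 0 < pn z / 2 by lra.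
  rewrite ler_pdivrMr //.
  have : 0 <= (t * a) * (a * pn z - 2) by apply: mulr_ge0; [apply: mulr_ge0; lra | lra].
  nra.
lra.
Qed.

Definition TT z := 2 / a ^+ 2 * (`|c| + `|lu| + `|ln (a / 8)| + a * pn z / 4 + 1)
  + T0 + 2 * K / a.

Lemma T0_ge0 : 0 <= T0.
Proof.
have k1 := K1; have ha := a_gt0; rewrite /T0.
have : 0 <= 2 / a ^+ 2 * (`|c| + `|lu| + `|ln (a / 4)| + 1).
  apply: mulr_ge0; first by rewrite divr_ge0 // sqr_ge0.
  have := normr_ge0 c; have := normr_ge0 lu; have := normr_ge0 (ln (a / 4)); lra.
have : 0 <= 2 * K / a by rewrite divr_ge0 //; lra.
lra.
Qed.

Lemma legS2 z : Sset z -> Rs <= pn z ->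
  T0 <= dot (mv z (TT z)) / a ^+ 2 /\
  forall s, 0 <= s <= 1 -> Sset (segp (mv z (TT z))
     (dot (mv z (TT z)) / a ^+ 2 * al, dot (mv z (TT z)) / a ^+ 2 * be) s).
Proof.
move=> Sz hR; have [d0 hK haz] := big_S Sz hR.
have k1 := K1; have ha := a_gt0; have t00 := T0_ge0.
have a2p : 0 < a ^+ 2 by rewrite exprn_gt0.
set T := TT z; set p := mv z T; set s0 := dot p / a ^+ 2.
have pz0 : 0 <= pn z by exact: nrm_ge0.
pose X := `|c| + `|lu| + `|ln (a / 8)| + a * pn z / 4 + 1.
have X0 : 0 <= X.
  rewrite /X; have := normr_ge0 c; have := normr_ge0 lu; have := normr_ge0 (ln (a / 8)).
  have : 0 <= a * pn z by apply: mulr_ge0; lra.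
  lra.
have ET : T * a ^+ 2 = 2 * X + T0 * a ^+ 2 + 2 * K * a.
  by rewrite /T /TT /X; field; exact: a_neq0.
have Ka : 0 <= K * a by apply: mulr_ge0; lra.
have T0a : 0 <= T0 * a ^+ 2 by apply: mulr_ge0; lra.
have TT0 : T0 <= T.
  rewrite -(ler_pM2r a2p); lra.
have dp : dot p = dot z + T * a ^+ 2 by rewrite /p dot_mv.
have es0 : s0 * a ^+ 2 = dot p by rewrite /s0 divfK // gt_eqF.
have hs0 : T0 <= s0 by rewrite -(ler_pM2r a2p) es0; lra.
split; first exact: hs0.
move=> s hs.
set q := segp p (s0 * al, s0 * be) s.
have dq : dot q = dot p by rewrite /q dot_seg dot_ray es0 subrr mulr0 addr0.
have pq := seg_pn p (s0 * al, s0 * be) hs; rewrite -/q pn_ray in pq; last lra.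
have pp : pn p <= pn z + T * a.
  by have := pn_mv_le z T; rewrite -/p ger0_norm //; lra.
have dle := dot_le q; rewrite dq in dle.
have dpa : 2 * K * a <= dot p by lra.
have hq : 2 * K <= pn q.
  rewrite -(ler_pM2r ha); have := ler_norm (dot p); lra.
split; first by apply: off_big; lra.
rewrite fE /f dq -/lu.
have /andP[_ hL] := L_bnd hq.
have hl : ln (2 * pn q) <= a / 8 * (2 * pn q) - ln (a / 8).
  by apply: ln_le_lin; [lra | rewrite divr_gt0].
have e : a / 8 * (2 * pn q) = a * pn q / 4 by field.
rewrite e in hl.
have apq : a * pn q <= a * pn z + T * a ^+ 2 + dot p.
  have : a * pn q <= a * (pn p + s0 * a) by rewrite ler_pM2l.
  have : a * pn p <= a * (pn z + T * a) by rewrite ler_pM2l.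
  have e1 : a * (s0 * a) = dot p by rewrite -es0; ring.
  have e2 : a * (pn z + T * a) = a * pn z + T * a ^+ 2 by ring.
  have e3 : a * (pn p + s0 * a) = a * pn p + a * (s0 * a) by ring.
  lra.
have := ler_normN c; have := ler_normN lu; have := ler_normN (ln (a / 8)); have := ler_norm c.
rewrite /X in ET.
move=> n1 n2 n3 n4.
have h1 : L q <= (a * pn z + T * a ^+ 2 + dot p) / 4 - ln (a / 8) by lra.
have h2 : T * a ^+ 2 <= dot p by lra.
have h3 : dot p - L q - lu >= T * a ^+ 2 / 2 - a * pn z / 4 + ln (a / 8) - lu by lra.
have Ka2 : 0 <= 2 * K * a by apply: mulr_ge0; lra.
have := ler_norm lu; lra.
Qed.

Lemma TT_ge0 z : 0 <= TT z.
Proof.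
have k1 := K1; have ha := a_gt0; have t00 := T0_ge0.
have pz0 : 0 <= pn z by exact: nrm_ge0.
rewrite /TT.
have : 0 <= 2 / a ^+ 2 * (`|c| + `|lu| + `|ln (a / 8)| + a * pn z / 4 + 1).
  apply: mulr_ge0; first by rewrite divr_ge0 // sqr_ge0.
  have := normr_ge0 c; have := normr_ge0 lu; have := normr_ge0 (ln (a / 8)).
  have : 0 <= a * pn z by apply: mulr_ge0; lra.
  lra.
have : 0 <= 2 * K / a by rewrite divr_ge0 //; lra.
lra.
Qed.

Lemma seg_mv (z : plane R) T s : segp z (mv z T) s = mv z (s * T).
Proof. by rewrite /segp /mv /=; congr pair; ring. Qed.

Lemma super_main : unique_unbounded_component Sset.
Proof.
have ha := a_gt0; have t00 := T0_ge0.
pose b0 := (T0 * al, T0 * be).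
apply: (@crit _ _ b0 Rs); first exact: (ray_S (lexx T0)).
- move=> M; pose r := T0 + `|M| / a + 1.
  have hr : T0 <= r.
    have : 0 <= `|M| / a by rewrite divr_ge0 // ltW.
    rewrite /r; lra.
  exists (r * al, r * be); split.
    apply: join_seg => s /andP[s0 s1]; rewrite ray_seg; apply: ray_S.
    have : 0 <= s * (r - T0) by apply: mulr_ge0; lra.
    lra.
  rewrite pn_ray; last lra.
  have -> : r * a = T0 * a + `|M| + a by rewrite /r; field; exact: a_neq0.
  have := ler_norm M; have : 0 <= T0 * a by apply: mulr_ge0; lra.
  lra.
- move=> z Sz hR.
  have [hT0 hseg] := legS2 Sz hR.
  have TT0 := TT_ge0 z.
  set T := TT z in hT0 hseg TT0 *.
  set s0 := dot (mv z T) / a ^+ 2 in hT0 hseg *.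
  have c1 : connected_component Sset z (mv z T).
    apply: join_seg => s /andP[s0' s1]; rewrite seg_mv; apply: legS1 => //.
    exact: mulr_ge0.
  have c2 : connected_component Sset (mv z T) (s0 * al, s0 * be).
    exact: join_seg.
  have c3 : connected_component Sset (s0 * al, s0 * be) b0.
    apply: join_seg => s /andP[s0' s1]; rewrite ray_seg; apply: ray_S.
    have : 0 <= (1 - s) * (s0 - T0) by apply: mulr_ge0; lra.
    have e : s0 + s * (T0 - s0) = T0 + (1 - s) * (s0 - T0) by ring.
    rewrite e; lra.
  apply: connected_component_sym.
  exact: connected_component_trans c1 (connected_component_trans c2 c3).
Qed.

Definition Tset := [set z | off_supp m z /\ ReS m u z < c].

Definition T1 := (`|c| + `|lu| + 1) / a ^+ 2 + 2 * K / a + 1.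

Lemma pn_rayN (r : R) : r <= 0 -> pn (r * al, r * be) = - r * a.
Proof. by move=> r0; rewrite /pn /= nrm_scale ler0_norm. Qed.

Lemma T1_ge0 : 0 <= T1.
Proof.
have k1 := K1; have ha := a_gt0; rewrite /T1.
have : 0 <= (`|c| + `|lu| + 1) / a ^+ 2.
  apply: divr_ge0; last exact: sqr_ge0.
  have := normr_ge0 c; have := normr_ge0 lu; lra.
have : 0 <= 2 * K / a by rewrite divr_ge0 //; lra.
lra.
Qed.

Lemma ray_T (r : R) : r <= - T1 -> Tset (r * al, r * be).
Proof.
move=> hr; have k1 := K1; have ha := a_gt0; have t10 := T1_ge0.
have a2p : 0 < a ^+ 2 by rewrite exprn_gt0.
have Ha2 : a ^+ 2 * T1 = `|c| + `|lu| + 1 + 2 * K * a + a ^+ 2.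
  by rewrite /T1; field; exact: a_neq0.
have Ha1 : a * T1 = (`|c| + `|lu| + 1) / a + 2 * K + a.
  by rewrite /T1; field; exact: a_neq0.
have X0 : 0 <= (`|c| + `|lu| + 1) / a.
  apply: divr_ge0; last lra.
  have := normr_ge0 c; have := normr_ge0 lu; lra.
have h2 : a ^+ 2 * T1 <= a ^+ 2 * (- r) by rewrite ler_pM2l //; lra.
have h1 : a * T1 <= a * (- r) by rewrite ler_pM2l //; lra.
have r0 : r <= 0 by lra.
have hp := pn_rayN r0.
have hpa : 2 * K <= - r * a by rewrite mulrC; lra.
split; first by apply: off_big; rewrite hp; lra.
rewrite fE /f dot_ray -/lu.
have /andP[hL _] : ln (pn (r * al, r * be) / 2) <= L (r * al, r * be) <= ln (2 * pn (r * al, r * be)).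
  by apply: L_bnd; rewrite hp.
have : 0 <= ln (pn (r * al, r * be) / 2) by apply: ln_ge0; rewrite hp; lra.
have Ka2 : 0 <= 2 * K * a by apply: mulr_ge0; lra.
have e : r * a ^+ 2 = - (a ^+ 2 * (- r)) by ring.
rewrite e.
have := ler_normN c; have := ler_normN lu.
lra.
Qed.

Definition Rt := 4 * K + 4 / a + 4 / a * (`|c| + `|lu| + `|ln (a / 8)|) + 1.

Lemma big_T z : Tset z -> Rt <= pn z ->
  [/\ 4 * K <= pn z, 4 <= a * pn z & 2 * dot z <= a * pn z].
Proof.
move=> [_ hc] hR; have k1 := K1; have ha := a_gt0.
have X0 : 0 <= `|c| + `|lu| + `|ln (a / 8)|.
  have := normr_ge0 c; have := normr_ge0 lu; have := normr_ge0 (ln (a / 8)); lra.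
have e0 : 0 <= 4 / a by rewrite divr_ge0 // ltW.
have e1 : 0 <= 4 / a * (`|c| + `|lu| + `|ln (a / 8)|) by apply: mulr_ge0.
have hK : 4 * K <= pn z by move: hR; rewrite /Rt; lra.
have e : a * Rt = 4 * K * a + 4 + 4 * (`|c| + `|lu| + `|ln (a / 8)|) + a.
  by rewrite /Rt; field; exact: a_neq0.
have haR : a * Rt <= a * pn z by rewrite ler_pM2l.
have Ka : 0 <= 4 * K * a by apply: mulr_ge0; lra.
split => //; first lra.
rewrite fE /f -/lu in hc.
have hK2 : 2 * K <= pn z by lra.
have /andP[_ hL] := L_bnd hK2.
have hl : ln (2 * pn z) <= a / 8 * (2 * pn z) - ln (a / 8).
  by apply: ln_le_lin; [lra | rewrite divr_gt0].
have e2 : a / 8 * (2 * pn z) = a * pn z / 4 by field.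
rewrite e2 in hl.
have := ler_norm c; have := ler_norm lu; have := ler_normN (ln (a / 8)).
lra.
Qed.

Lemma legT1 z t : Tset z -> Rt <= pn z -> 0 <= t -> Tset (mv z (- t)).
Proof.
move=> Tz hR t0; have [hK haz hd] := big_T Tz hR.
have k1 := K1; have ha := a_gt0.
have pz0 : 0 <= pn z by exact: nrm_ge0.
have hw : pn z / 2 <= pn (mv z (- t)).
  apply: nrm_ge; rewrite -nrm_sq -/(pn (mv z (- t))) pn_mv_sq.
  have e : (pn z / 2) ^+ 2 = pn z ^+ 2 / 4 by field.
  rewrite e; apply: (arith1 ha pz0 t0 hd); ring.
split; first by apply: off_big; lra.
case: Tz => _; rewrite !fE /f dot_mv => hc.
have hdL : L z - L (mv z (- t)) <= (t * a) / (pn z / 4).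
  apply: L_diff; first exact: mulr_ge0 t0 (ltW ha).
    lra.
  move=> x hx; have /andP[dw1 dw2] := dist_bnd (mv z (- t)) hx.
  have /andP[dz1 dz2] := dist_bnd z hx.
  split; [lra|lra|].
  have -> : z.1 - x = ((mv z (- t)).1 - x) + t * al by rewrite /mv /=; ring.
  have -> : z.2 = (mv z (- t)).2 + t * be by rewrite /mv /=; ring.
  apply: le_trans (nrm_tri _ _ _ _) _.
  by rewrite nrm_scale ger0_norm.
have hq : (t * a) / (pn z / 4) <= t * a ^+ 2.
  have p0 : 0 < pn z / 4 by lra.
  rewrite ler_pdivrMr //.
  have : 0 <= (t * a) * (a * pn z - 4) by apply: mulr_ge0; [apply: mulr_ge0; lra | lra].
  have e : t * a ^+ 2 * (pn z / 4) = (t * a) * (a * pn z) / 4 by ring.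
  rewrite e; nra.
have e : - t * a ^+ 2 = - (t * a ^+ 2) by ring.
rewrite e; lra.
Qed.

Definition TTt z := (`|c| + `|lu| + a * pn z / 2 + 2 * K * a + T1 * a ^+ 2 + 1) / a ^+ 2.

Lemma TTt_ge0 z : 0 <= TTt z.
Proof.
have k1 := K1; have ha := a_gt0; have t10 := T1_ge0.
have pz0 : 0 <= pn z by exact: nrm_ge0.
rewrite /TTt; apply: divr_ge0; last exact: sqr_ge0.
have := normr_ge0 c; have := normr_ge0 lu.
have : 0 <= a * pn z by apply: mulr_ge0; lra.
have : 0 <= 2 * K * a by apply: mulr_ge0; lra.
have : 0 <= T1 * a ^+ 2 by apply: mulr_ge0; [lra | exact: sqr_ge0].
lra.
Qed.

Lemma legT2 z : Tset z -> Rt <= pn z ->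
  dot (mv z (- TTt z)) / a ^+ 2 <= - T1 /\
  forall s, 0 <= s <= 1 -> Tset (segp (mv z (- TTt z))
     (dot (mv z (- TTt z)) / a ^+ 2 * al, dot (mv z (- TTt z)) / a ^+ 2 * be) s).
Proof.
move=> Tz hR; have [hK haz hd] := big_T Tz hR.
have k1 := K1; have ha := a_gt0; have t10 := T1_ge0.
have a2p : 0 < a ^+ 2 by rewrite exprn_gt0.
set T := TTt z; set p := mv z (- T); set s0 := dot p / a ^+ 2.
have ET : T * a ^+ 2 = `|c| + `|lu| + a * pn z / 2 + 2 * K * a + T1 * a ^+ 2 + 1.
  by rewrite /T /TTt; field; exact: a_neq0.
have dp : dot p = dot z - T * a ^+ 2 by rewrite /p dot_mv; ring.
have Ka2 : 0 <= 2 * K * a by apply: mulr_ge0; lra.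
have T1a : 0 <= T1 * a ^+ 2 by apply: mulr_ge0; lra.
have nc := normr_ge0 c; have nl := normr_ge0 lu.
have dpb : dot p <= - (`|c| + `|lu| + 2 * K * a + T1 * a ^+ 2 + 1) by lra.
have es0 : s0 * a ^+ 2 = dot p by rewrite /s0 divfK // gt_eqF.
have hs0 : s0 <= - T1.
  rewrite -(ler_pM2r a2p) es0; have e : - T1 * a ^+ 2 = - (T1 * a ^+ 2) by ring.
  rewrite e; lra.
split; first exact: hs0.
move=> s hs.
set q := segp p (s0 * al, s0 * be) s.
have dq : dot q = dot p by rewrite /q dot_seg dot_ray es0 subrr mulr0 addr0.
have dle := dot_le q; rewrite dq in dle.
have hq : 2 * K <= pn q.
  rewrite -(ler_pM2r ha); have := ler_normN (dot p); lra.
split; first by apply: off_big; lra.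
rewrite fE /f dq -/lu.
have /andP[hL _] := L_bnd hq.
have : 0 <= ln (pn q / 2) by apply: ln_ge0; lra.
have := ler_normN c; have := ler_normN lu.
lra.
Qed.

Lemma sub_main : unique_unbounded_component Tset.
Proof.
have ha := a_gt0; have t10 := T1_ge0.
pose b1 := (- T1 * al, - T1 * be).
apply: (@crit _ _ b1 Rt); first exact: (ray_T (lexx (- T1))).
- move=> M; pose r := - (T1 + `|M| / a + 1).
  have hr : r <= - T1.
    have : 0 <= `|M| / a by rewrite divr_ge0 // ltW.
    rewrite /r; lra.
  exists (r * al, r * be); split.
    apply: join_seg => s /andP[s0 s1]; rewrite ray_seg; apply: ray_T.
    have : 0 <= s * (- T1 - r) by apply: mulr_ge0; lra.
    have e : - T1 + s * (r - - T1) = - T1 - s * (- T1 - r) by ring.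
    rewrite e; lra.
  rewrite pn_rayN; last lra.
  have -> : - r * a = T1 * a + `|M| + a by rewrite /r; field; exact: a_neq0.
  have := ler_norm M; have : 0 <= T1 * a by apply: mulr_ge0; lra.
  lra.
- move=> z Tz hR.
  have [hT0 hseg] := legT2 Tz hR.
  have TT0 := TTt_ge0 z.
  set T := TTt z in hT0 hseg TT0 *.
  set s0 := dot (mv z (- T)) / a ^+ 2 in hT0 hseg *.
  have c1 : connected_component Tset z (mv z (- T)).
    apply: join_seg => s /andP[s0' s1]; rewrite seg_mv mulrN; apply: legT1 => //.
    exact: mulr_ge0.
  have c2 : connected_component Tset (mv z (- T)) (s0 * al, s0 * be).
    exact: join_seg.
  have c3 : connected_component Tset (s0 * al, s0 * be) b1.
    apply: join_seg => s /andP[s0' s1]; rewrite ray_seg; apply: ray_T.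
    have : 0 <= (1 - s) * (- T1 - s0) by apply: mulr_ge0; lra.
    have e : s0 + s * (- T1 - s0) = - T1 - (1 - s) * (- T1 - s0) by ring.
    rewrite e; lra.
  apply: connected_component_sym.
  exact: connected_component_trans c1 (connected_component_trans c2 c3).
Qed.
End Main.

Unset Implicit Arguments.

Theorem proposition3p4 (R : realType) (m : probability R R)
  (z0 : plane R) (c : R) :
  compactly_supported m ->
  off_supp m z0 ->
  cauchy_transform m z0 != 0 ->
  unique_unbounded_component
    [set z | off_supp m z /\ c < ReS m (cauchy_transform m z0) z] /\
  unique_unbounded_component
    [set z | off_supp m z /\ ReS m (cauchy_transform m z0) z < c].
Proof.
move=> cs _ hu; have [K [K1 hsK mK]] := supp_K cs.
split.
- exact: (super_main c K1 hsK mK hu).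
- exact: (sub_main c K1 hsK mK hu).
Qed.
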